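(* Let $n\ge 1$ and let $\Omega=\bigoplus_{j=1}^{n}\begin{pmatrix}0&1\\-1&0\end{pmatrix}$. Let $\sigma$ be a real symmetric $2n\times 2n$ matrix satisfying $\sigma+i\Omega\ge 0$ (i.e. $\sigma$ is an $n$-mode covariance matrix). Let $\lambda^{\uparrow}_1\le\lambda^{\uparrow}_2\le\dots\le\lambda^{\uparrow}_{2n}$ be the eigenvalues of $\sigma$ in increasing order and $\lambda^{\downarrow}_1\ge\lambda^{\downarrow}_2\ge\dots\ge\lambda^{\downarrow}_{2n}$ the same eigenvalues in decreasing order. Then $$\lambda^{\uparrow}_j\,\lambda^{\downarrow}_j\ge 1\qquad\text{for all }1\le j\le n.$$
   Context: For a system of $n$ bosonic modes with canonical operators $\hat{\mathbf R}=(\hat x_1,\hat p_1,\dots,\hat x_n,\hat p_n)^{\sf T}$ obeying $[\hat R_j,\hat R_k]=i\Omega_{jk}$, the covariance matrix (CM) of a state $\varrho$ is $\sigma_{jk}=\mathrm{Tr}(\{\hat R_j,\hat R_k\}\varrho)-2\mathrm{Tr}(\hat R_j\varrho)\mathrm{Tr}(\hat R_k\varrho)$; a real symmetric matrix is a CM of a physical state iff $\sigma+i\Omega\ge0$ (Robertson–Schrödinger uncertainty relation). *)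

(* Defs.v *)
From HB Require Import structures.
From mathcomp Require Import all_boot all_order all_algebra.
From mathcomp Require Import complex.
Set Implicit Arguments. Unset Strict Implicit. Unset Printing Implicit Defensive.
Import Order.TTheory GRing.Theory Num.Theory.
Local Open Scope ring_scope.

(* Symplectic form Omega = (+)_{k=1}^n [[0,1],[-1,0]] on 2n indices,
   0-based ordering (x_1,p_1,...,x_n,p_n): Omega_{2k,2k+1}=1, Omega_{2k+1,2k}=-1. *)
Definition Omega (R : rcfType) (n : nat) : 'M[R]_(2 * n) :=
  \matrix_(i < 2 * n, j < 2 * n)
    (if ~~ odd i && (j == i.+1 :> nat) then 1
     else if odd i && (j.+1 == i :> nat) then -1 else 0).

Definition cmx (R : rcfType) (m : nat) (A : 'M[R]_m) : 'M[R[i]]_m :=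
  map_mx (fun x => (x%:C)%C) A.

Definition adjmx (C : numClosedFieldType) (m p : nat) (A : 'M[C]_(m, p)) : 'M[C]_(p, m) :=
  (map_mx Num.conj A)^T.

(* Hermitian positive semidefiniteness: z^dagger H z >= 0 for every complex vector z
   (in a numClosedFieldType, 0 <= w means w is real and nonnegative). *)
Definition psd_cmx (C : numClosedFieldType) (m : nat) (H : 'M[C]_m) : Prop :=
  forall z : 'cV[C]_m, 0 <= (adjmx z *m H *m z) 0 0.

Definition is_CM (R : rcfType) (n : nat) (sigma : 'M[R]_(2 * n)) : Prop :=
  sigma^T = sigma /\ psd_cmx (cmx sigma + (('i)%C) *: cmx (Omega R n)).

Definition eigs_increasing (R : rcfType) (m : nat) (A : 'M[R]_m) (s : seq R) : Prop :=
  [/\ size s = m, sorted <=%R s & char_poly A = \prod_(x <- s) ('X - x%:P)].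

(* Main.v *)
Set Warnings "-notation-overridden,-ambiguous-paths".
Require Import Defs.
From HB Require Import structures.
From mathcomp Require Import all_boot all_order all_algebra.
From mathcomp Require Import complex spectral sesquilinear ring lra zify.
Set Implicit Arguments. Unset Strict Implicit. Unset Printing Implicit Defensive.
Import Order.TTheory GRing.Theory Num.Theory.
Local Open Scope ring_scope.

Definition pp (i : nat) : nat := if odd i then i.-1 else i.+1.

Lemma Omega_entry (R : rcfType) n (i j : 'I_(2*n)) :
  Omega R n i j = (if odd i then -1 else 1) * ((j:nat) == pp i)%:R.
Proof.
rewrite /Omega mxE /pp; case: (boolP (odd i)) => Oi /=.
  idtac; have: (0 < i)%N by case: (nat_of_ord i) Oi.
  case: (nat_of_ord i) Oi => [//|k] _ _ /=.
  by rewrite eqSS; case: eqP => _; rewrite /= ?mulr1 ?mulr0.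
by case: eqP => _; rewrite /= ?mul1r.
Qed.

Lemma pp_odd i : odd (pp i) = ~~ odd i.
Proof.
rewrite /pp; case: (boolP (odd i)) => Oi /=; last by rewrite Oi.
by move: Oi; case: i => [//|k] /=; case: (odd k).
Qed.

Lemma ppK i : pp (pp i) = i.
Proof.
rewrite /pp; case: (boolP (odd i)) => Oi /=.
  by move: Oi; case: i => [//|k] /=; case: (odd k).
by rewrite Oi.
Qed.

Lemma pp_lt n (i : 'I_(2*n)) : (pp i < 2 * n)%N.
Proof.
rewrite /pp; case: (boolP (odd i)) => Oi.
  by apply: leq_ltn_trans (ltn_ord i); apply: leq_pred.
rewrite ltn_neqAle ltn_ord andbT; apply/negP => /eqP E.
by move: (odd_double n); rewrite -mul2n -E /= Oi.
Qed.

Lemma sum_delta (R : pzRingType) N (a : nat) (ha : (a < N)%N) (F : 'I_N -> R) :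
  \sum_(k < N) (((k:nat) == a)%:R * F k) = F (Ordinal ha).
Proof.
rewrite (bigD1 (Ordinal ha)) //= eqxx mul1r big1 ?addr0 // => k Hk.
case: eqP => [E|]; last by rewrite mul0r.
by case/negP: Hk; apply/eqP; apply: val_inj.
Qed.

Lemma trOmega (R : rcfType) n : (Omega R n)^T = - Omega R n.
Proof.
apply/matrixP => i j; rewrite mxE [RHS]mxE !Omega_entry.
case: (eqVneq (nat_of_ord i) (pp j)) => [E|N1].
  have -> : (nat_of_ord j == pp i) by rewrite E ppK.
  by rewrite E pp_odd; case: (odd j); rewrite /= ?mulr1 ?opprK.
have -> : (nat_of_ord j == pp i) = false.
  by apply/negP => /eqP E; move: N1; rewrite E ppK eqxx.
by rewrite !mulr0 oppr0.
Qed.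

Lemma Omega_orth (R : rcfType) n : Omega R n *m (Omega R n)^T = 1%:M.
Proof.
apply/matrixP => i j; rewrite trOmega mulmxN [in RHS]mxE.
rewrite [fun_of_matrix (- _) i j]mxE [fun_of_matrix (_ *m _) i j]mxE.
rewrite (eq_bigr (fun k : 'I_(2*n) => ((k:nat) == pp i)%:R * ((if odd i then -1 else 1) * (if odd k then -1 else 1) * ((j:nat) == pp k)%:R))); last first.
  by move=> k _; rewrite !Omega_entry; ring.
rewrite (sum_delta (pp_lt i)) /= ppK pp_odd eq_sym.
by case: (odd i) => /=; ring.
Qed.

Definition ct (C : numClosedFieldType) m n (A : 'M[C]_(m, n)) : 'M[C]_(n, m) :=
  map_mx Num.conj (A^T).

Definition Bf (C : numClosedFieldType) m (X : 'M[C]_m) (u v : 'rV[C]_m) : C :=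
  (u *m X *m ct v) 0 0.

Section K.
Variable C : numClosedFieldType.

Lemma ctD m n (A B : 'M[C]_(m, n)) : ct (A + B) = ct A + ct B.
Proof. by rewrite /ct linearD /= map_mxD. Qed.

Lemma ctZ m n a (A : 'M[C]_(m, n)) : ct (a *: A) = a^* *: ct A.
Proof. by rewrite /ct linearZ /= map_mxZ. Qed.

Lemma ctM m n p (A : 'M[C]_(m, n)) (B : 'M[C]_(n, p)) : ct (A *m B) = ct B *m ct A.
Proof. by rewrite /ct trmx_mul map_mxM. Qed.

Lemma BfDl m X (u1 u2 v : 'rV[C]_m) : Bf X (u1 + u2) v = Bf X u1 v + Bf X u2 v.
Proof. by rewrite /Bf !mulmxDl mxE. Qed.

Lemma BfZl m X a (u v : 'rV[C]_m) : Bf X (a *: u) v = a * Bf X u v.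
Proof. by rewrite /Bf -!scalemxAl mxE. Qed.

Lemma BfDr m X (u v1 v2 : 'rV[C]_m) : Bf X u (v1 + v2) = Bf X u v1 + Bf X u v2.
Proof. by rewrite /Bf ctD mulmxDr mxE. Qed.

Lemma BfZr m X a (u v : 'rV[C]_m) : Bf X u (a *: v) = a^* * Bf X u v.
Proof. by rewrite /Bf ctZ -scalemxAr mxE. Qed.

Lemma BfDm m (X Y : 'M[C]_m) (u v : 'rV[C]_m) : Bf (X + Y) u v = Bf X u v + Bf Y u v.
Proof. by rewrite /Bf mulmxDr mulmxDl mxE. Qed.

Lemma BfZm m (X : 'M[C]_m) a (u v : 'rV[C]_m) : Bf (a *: X) u v = a * Bf X u v.
Proof. by rewrite /Bf -scalemxAr -scalemxAl mxE. Qed.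

Lemma Bf_conj m (X : 'M[C]_m) (u v : 'rV[C]_m) :
  Bf X (map_mx Num.conj u) (map_mx Num.conj v) = Bf X^T v u.
Proof.
rewrite /Bf /ct.
rewrite (_ : map_mx Num.conj (map_mx Num.conj v)^T = v^T); last first.
  by apply/matrixP=> i j; rewrite !mxE /= conjCK.
transitivity (((map_mx Num.conj u *m X *m v^T)^T) 0 0); first by rewrite [RHS]mxE.
by rewrite !trmx_mul trmxK mulmxA map_trmx.
Qed.

Lemma Bf_expand m X (u w : 'rV[C]_m) a :
  Bf X (u + a *: w) (u + a *: w) =
  Bf X u u + a^* * Bf X u w + a * Bf X w u + a * a^* * Bf X w w.
Proof. rewrite !(BfDl, BfDr, BfZl, BfZr); ring. Qed.

Lemma BfN m (X : 'M[C]_m) (u v : 'rV[C]_m) : Bf (- X) u v = - Bf X u v.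
Proof. by rewrite /Bf mulmxN mulNmx mxE. Qed.

Lemma key m (S W : 'M[C]_m) (hS : S^T = S) (hW : W^T = -W)
  (hWo : W *m W^T = 1%:M) (hWr : map_mx Num.conj W = W)
  (hpsd : forall z : 'rV[C]_m, 0 <= Bf (S + 'i *: W) z z)
  (u : 'rV[C]_m) (t : C) (ht : t^* = t) :
  0 <= Bf S u u + t^+2 * Bf S (u *m W) (u *m W) - 2 * t * Bf 1%:M u u.
Proof.
have h1 z : 0 <= Bf S z z - 'i * Bf W z z.
  have := hpsd (map_mx Num.conj z).
  by rewrite Bf_conj linearD /= linearZ /= hS hW BfDm BfZm BfN mulrN.
have h2 z : 0 <= Bf S z z + 'i * Bf W z z by have := hpsd z; rewrite BfDm BfZm.
set w := u *m W.
have ctW : ct W = W^T by rewrite /ct -map_trmx hWr.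
have hN1 : Bf W u w = Bf 1%:M u u.
  by rewrite /Bf /w ctM ctW !mulmxA -(mulmxA u W) hWo mulmx1.
have hN2 : Bf W w u = - Bf 1%:M u u.
  rewrite /Bf /w -(mulmxA u W W) (_ : W *m W = - (W *m W^T)); last by rewrite hW mulmxN opprK.
  by rewrite hWo mulmxN mulNmx mxE mulmx1.
have ca : ('i * t)^* = - ('i * t) by rewrite rmorphM /= conjCi ht mulNr.
have := addr_ge0 (h1 (u + ('i*t) *: w)) (h2 (u + (-('i*t)) *: w)).
rewrite !Bf_expand rmorphN /= ca opprK hN1 hN2.
have hi : 'i * 'i = -1 :> C by rewrite -expr2 sqrCi.
move: (Bf S u u) (Bf S u w) (Bf S w u) (Bf S w w) (Bf W u u) (Bf W w w) (Bf 1%:M u u) => a b c d e f N.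
move: hi; set I := 'i => hi.
move=> H; move: H.
match goal with |- is_true (0 <= ?L) -> is_true (0 <= ?T) =>
  have Z : L = 2 * T + (I*I+1) * (4*t*N - 2*t^+2*d) by rewrite /I; ring end.
by rewrite Z hi addNr mul0r addr0 pmulr_rge0 // ltr0n.
Qed.

Lemma char_poly_conj m (P D : 'M[C]_m) : P \in unitmx ->
  char_poly (invmx P *m D *m P) = char_poly D.
Proof.
move=> Pu; rewrite /char_poly /char_poly_mx.
set Q := map_mx polyC (invmx P); set Q' := map_mx polyC P.
have QQ : Q *m Q' = 1%:M by rewrite -map_mxM mulVmx // map_mx1.
have -> : map_mx polyC (invmx P *m D *m P) = Q *m map_mx polyC D *m Q'.
  by rewrite !map_mxM.
have E : ('X%:M : 'M_m) = Q *m 'X%:M *m Q'.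
  by rewrite mul_mx_scalar -scalemxAl QQ scalemx1.
rewrite {1}E -mulmxBl -mulmxBr !det_mulmx mulrAC -det_mulmx QQ det1 mul1r.
by [].
Qed.

Lemma Bf_unitary m (P X : 'M[C]_m) (c : 'rV[C]_m) :
  Bf X (c *m P) (c *m P) = Bf (P *m X *m ct P) c c.
Proof. by rewrite /Bf ctM !mulmxA. Qed.

Lemma Bf_diag m (d c : 'rV[C]_m) :
  Bf (diag_mx d) c c = \sum_k d 0 k * (c 0 k * (c 0 k)^*).
Proof.
rewrite /Bf mxE; apply: eq_bigr => k _.
rewrite mul_mx_diag !mxE; ring.
Qed.

Lemma Bf_one m (c : 'rV[C]_m) : Bf 1%:M c c = \sum_k c 0 k * (c 0 k)^*.
Proof.
rewrite /Bf mulmx1 mxE; apply: eq_bigr => k _; rewrite !mxE.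
by [].
Qed.

Lemma Bf_bound m (d c : 'rV[C]_m) (a : C) :
  (forall k, ~~ (d 0 k <= a) -> c 0 k = 0) ->
  Bf (diag_mx d) c c <= a * Bf 1%:M c c.
Proof.
move=> H; rewrite Bf_diag Bf_one mulr_sumr; apply: ler_sum => k _.
case: (boolP (d 0 k <= a)) => hk.
  by rewrite ler_wpM2r // mul_conjC_ge0.
by rewrite H // mul0r !mulr0.
Qed.

Lemma Bf_one_gt0 m (c : 'rV[C]_m) : c != 0 -> 0 < Bf 1%:M c c.
Proof.
move=> cn0; rewrite Bf_one lt_def sumr_ge0 ?andbT; last by move=> k _; apply: mul_conjC_ge0.
apply/eqP => /(psumr_eq0P (fun k _ => mul_conjC_ge0 _)) H.
case/negP: cn0; apply/eqP/rowP => k; rewrite mxE.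
by apply/eqP; rewrite -mul_conjC_eq0 H.
Qed.

Definition Vm m (K : pred 'I_m) : 'M[C]_(#|K|, m) :=
  \matrix_(i, k) ((k == enum_val i)%:R).

Lemma Vm_rank m (K : pred 'I_m) : \rank (Vm K) = #|K|.
Proof.
have h2 : \rank (Vm K *m (Vm K)^T) = #|K|.
  rewrite (_ : Vm K *m (Vm K)^T = 1%:M) ?mxrank1 //.
  apply/matrixP => i i'; rewrite !mxE.
  rewrite (eq_bigr (fun k => ((k == enum_val i)%:R * (k == enum_val i')%:R)));
    last by move=> k _; rewrite !mxE.
  rewrite (bigD1 (enum_val i)) //= eqxx mul1r big1 ?addr0.
    by rewrite (inj_eq enum_val_inj) eq_sym.
  by move=> k /negbTE ->; rewrite mul0r.
have h1 := mxrankM_maxl (Vm K) (Vm K)^T; rewrite h2 in h1.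
by apply/eqP; rewrite eqn_leq rank_leq_row h1.
Qed.

Lemma Vm_supp m (K : pred 'I_m) (x : 'rV[C]_#|K|) k :
  k \notin K -> (x *m Vm K) 0 k = 0.
Proof.
move=> kK; rewrite mxE big1 // => i _; rewrite mxE.
case: eqP => [E|]; last by rewrite mulr0.
by case/negP: kK; rewrite E enum_valP.
Qed.


Lemma exists_pair m (K1 K2 : pred 'I_m) (P W : 'M[C]_m) :
  P \in unitmx -> W \in unitmx -> (m < #|K1| + #|K2|)%N ->
  exists c1 c2 : 'rV[C]_m, [/\ c1 != 0, (forall k, k \notin K1 -> c1 0 k = 0),
    (forall k, k \notin K2 -> c2 0 k = 0) & c1 *m P *m W = c2 *m P].
Proof.
move=> Pu Wu hK.
set A := Vm K1 *m P *m W; set B := Vm K2 *m P.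
have rA : \rank A = #|K1| by rewrite /A !mxrankMfree ?row_free_unit // Vm_rank.
have rB : \rank B = #|K2| by rewrite /B !mxrankMfree ?row_free_unit // Vm_rank.
have h1 := mxrank_sum_cap A B; have h2 := rank_leq_col (A + B)%MS.
have X0 : (A :&: B)%MS != 0.
  by apply/negP; rewrite -mxrank_eq0 => /eqP h3; rewrite h3 rA rB in h1; lia.
case: (pickP (fun i => row i (A :&: B)%MS != 0)) => [i ri | H]; last first.
  by case/negP: X0; apply/eqP/row_matrixP => i; rewrite row0; move: (H i) => /= /negbFE /eqP.
have rsA : (row i (A :&: B)%MS <= A)%MS := submx_trans (row_sub i _) (capmxSl A B).
have rsB : (row i (A :&: B)%MS <= B)%MS := submx_trans (row_sub i _) (capmxSr A B).
case/submxP: rsA => x hx; case/submxP: rsB => y hy.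
exists (x *m Vm K1), (y *m Vm K2); split.
- apply: contraNneq ri => E; rewrite hx /A !mulmxA E !mul0mx //.
- by move=> k; apply: Vm_supp.
- by move=> k; apply: Vm_supp.
- by rewrite -!mulmxA -/B -hy (mulmxA (Vm K1)) -/A -hx.
Qed.
End K.

Lemma real_ineq (R : realFieldType) (a b : R) :
  (forall t, 0 <= a + t^+2 * b - 2 * t) -> 1 <= a * b.
Proof.
move=> H; case: (ltrP 0 b) => hb.
  have := H b^-1; rewrite expr2 -mulrA mulVf ?gt_eqF // mulr1 => h.
  have hy : b^-1 * b = 1 by rewrite mulVf ?gt_eqF.
  move: h hy hb; move: (b^-1) => y h hy hb.
  have := mulr_ge0 (ltW hb) h; nra.
have h1 := H (`|a| + 1); have h2 := ler_norm a; have h4 := normr_ge0 a.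
have h3 : (`|a| + 1) ^+ 2 * b <= 0 by rewrite mulr_ge0_le0 // sqr_ge0.
move: h1 h2 h3 h4; move: ((`|a| + 1) ^+ 2 * b) => X; move: (`|a|) => A; lra.
Qed.

Lemma count_le (R : realDomainType) (s : seq R) k :
  sorted <=%R s -> (k < size s)%N -> (k.+1 <= count (fun x : R => (x <= s`_k)%R) s)%N.
Proof.
move=> hs hk; rewrite -{2}(mkseq_nth 0 s) /mkseq count_map.
have -> : iota 0 (size s) = iota 0 k.+1 ++ iota k.+1 (size s - k.+1).
  by rewrite -iotaD subnKC.
rewrite count_cat; apply: leq_trans (leq_addr _ _).
rewrite (@eq_in_count _ _ predT) ?count_predT ?size_iota //.
move=> i; rewrite mem_iota => /andP [_ hi] /=.
move: hi; rewrite add0n ltnS => hi.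
apply: (le_sorted_leq_nth 0 hs); rewrite ?inE //; exact: leq_ltn_trans hi hk.
Qed.

Lemma card_count (T : finType) (C : Type) (f : T -> C) (p : pred C) :
  #|[pred k | p (f k)]| = count p [seq f k | k <- enum T].
Proof. by rewrite cardE count_map /enum_mem size_filter (@eq_filter _ _ predT) // filter_predT; apply: eq_count. Qed.

Unset Implicit Arguments.

(* lambda^up_j = s`_(j-1), lambda^down_j = s`_(2n-j); 0-based j < n. *)
Theorem lemma2 (R : rcfType) (n : nat) (hn : (0 < n)%N)
  (sigma : 'M[R]_(2 * n)) (hCM : is_CM sigma)
  (s : seq R) (hs : eigs_increasing sigma s) :
  forall j : nat, (j < n)%N -> 1 <= s`_j * s`_(2 * n - 1 - j).
Proof.
move=> j hj; case: hCM => hsym hpsd; case: hs => hsz hsort hchar.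
set m := (2 * n)%N in sigma hsym hpsd hsz hchar *.
set S := cmx sigma; set W := cmx (Omega R n).
have hST : S^T = S by rewrite /S /cmx map_trmx hsym.
have hWT : W^T = - W by rewrite /W /cmx map_trmx trOmega map_mxN.
have hWo : W *m W^T = 1%:M by rewrite /W /cmx map_trmx -map_mxM Omega_orth map_mx1.
have hWr : map_mx Num.conj W = W.
  by apply/matrixP => i k; rewrite !mxE conj_Creal //; apply/complex_realP; eexists.
have hSr : map_mx Num.conj S = S.
  by apply/matrixP => i k; rewrite !mxE conj_Creal //; apply/complex_realP; eexists.
have hpsd' : forall z : 'rV[R[i]]_m, 0 <= Bf (S + 'i *: W) z z.
  move=> z; have := hpsd (ct z); rewrite /adjmx.
  have -> : (map_mx Num.conj (ct z))^T = z by apply/matrixP => i k; rewrite !mxE conjCK.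
  by [].
have hctS : ct S = S by rewrite /ct -map_trmx hSr hST.
have hctW : ct W = W^T by rewrite /ct -map_trmx hWr.
have hnorm : S \is normalmx by apply/normalmxP; rewrite -/(ct S) hctS.
have hSd : S = invmx (spectralmx S) *m diag_mx (spectral_diag S) *m spectralmx S by apply/orthomx_spectralP.
set P := spectralmx S in hSd; set d := spectral_diag S in hSd.
have Pu : P \is unitarymx := spectral_unitarymx S.
have PPt : P *m ct P = 1%:M := unitarymxP Pu.
have Punit := unitarymx_unit Pu.
have hinv : invmx P = ct P := invmx_unitary Pu.
have hD : P *m S *m ct P = diag_mx d.
  by rewrite {1}hSd hinv !mulmxA PPt mul1mx -mulmxA PPt mulmx1.
have [Wu _] := mulmx1_unit hWo.
have hperm : perm_eq [seq d 0 k | k <- enum 'I_m] [seq (x%:C)%C | x <- s].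
  apply: prod_XsubC_eq.
  rewrite [X in _ = X](_ : _ = map_poly (real_complex R) (\prod_(x <- s) ('X - x%:P))); last first.
    by rewrite map_prod_XsubC big_map.
  rewrite -hchar map_char_poly.
  rewrite (_ : map_mx _ sigma = S) // hSd char_poly_conj // char_poly_trig ?diag_mx_is_trig //.
  rewrite big_map big_enum /=.
  by apply: eq_bigr => k _; rewrite mxE eqxx mulr1n.
set al := s`_j; set be := s`_(m - 1 - j).
have cnt : forall x : R, #|[pred k | d 0 k <= (x%:C)%C]| = count (fun y => y <= x) s.
  move=> x; rewrite (card_count (d 0) (fun y => y <= (x%:C)%C)) (permP hperm) count_map.
  by apply: eq_count => y /=; rewrite lecR.
have k1 : (j.+1 <= #|[pred k | (d 0 k <= (al%:C)%C)%R]|)%N.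
  by rewrite cnt; apply: count_le => //; rewrite hsz /m; lia.
have k2 : ((m - 1 - j).+1 <= #|[pred k | (d 0 k <= (be%:C)%C)%R]|)%N.
  by rewrite cnt; apply: count_le => //; rewrite hsz /m; lia.
have hK : (m < #|[pred k | (d 0 k <= (al%:C)%C)%R]| + #|[pred k | (d 0 k <= (be%:C)%C)%R]|)%N.
  by rewrite /m in k1 k2 *; lia.
have [c1 [c2 [c1n0 hs1 hs2 hE]]] := exists_pair Punit Wu hK.
set u := c1 *m P.
have hN : Bf 1%:M u u = Bf 1%:M c1 c1 by rewrite /u Bf_unitary mulmx1 PPt.
have hNw : Bf 1%:M (u *m W) (u *m W) = Bf 1%:M u u.
  by rewrite Bf_unitary mulmx1 hctW hWo.
have ha : Bf S u u <= (al%:C)%C * Bf 1%:M u u.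
  rewrite /u Bf_unitary hD hN; apply: Bf_bound => k hk; apply: hs1; by rewrite inE.
have hb : Bf S (u *m W) (u *m W) <= (be%:C)%C * Bf 1%:M u u.
  rewrite -hNw (_ : u *m W = c2 *m P) // Bf_unitary hD Bf_unitary mulmx1 PPt.
  by apply: Bf_bound => k hk; apply: hs2; rewrite inE.
have hN0 : 0 < Bf 1%:M u u by rewrite hN Bf_one_gt0.
apply: real_ineq => tau.
have ht : ((tau%:C)%C)^* = (tau%:C)%C by rewrite conj_Creal //; apply/complex_realP; eexists.
have hk := key hST hWT hWo hWr hpsd' u ht.
have t2 : 0 <= ((tau%:C)%C)^+2 by rewrite -rmorphXn ler0c sqr_ge0.
rewrite -ler0c -(pmulr_rge0 _ hN0); apply: le_trans hk _.
rewrite (_ : ((al + tau^+2 * be - 2 * tau)%:C)%C = (al%:C)%C + ((tau%:C)%C)^+2 * (be%:C)%C - 2 * (tau%:C)%C); last first.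
  by rewrite !(rmorphB, rmorphD, rmorphM, rmorphXn) /= ?rmorph_nat.
move: ha hb t2; move: (Bf S u u) (Bf S (u *m W) (u *m W)) (Bf 1%:M u u) ((tau%:C)%C ^+ 2) => A B N T ha hb t2.
have E : N * ((al%:C)%C + T * (be%:C)%C - 2 * (tau%:C)%C) = (al%:C)%C * N + T * ((be%:C)%C * N) - 2 * (tau%:C)%C * N by ring.
rewrite E lerD2r; apply: lerD ha _; exact: ler_wpM2l.
Qed.
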